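(* Consider a Hex region that is completely filled with black and white stones. Changing the color of a single stone from black to white increases the number of connected components of Black's stones by at most 2.
   Context: A Hex region is a set of hexagonal cells with the usual hexagonal adjacency (each cell has at most six neighbors). Connected components of Black's stones are the maximal sets of black-occupied cells connected through chains of adjacent black cells. *)

(* Defs.v *)
From mathcomp Require Import all_boot all_order all_algebra.
Set Implicit Arguments. Unset Strict Implicit. Unset Printing Implicit Defensive.
Import GRing.Theory Num.Theory.
Local Open Scope ring_scope.

(* Hexagonal cells in axial coordinates (a, b) : int * int.  The six
   neighbours of (a, b) are (a+-1, b), (a, b+-1), (a+1, b-1), (a-1, b+1). *)
Definition hex_adj (p q : int * int) : bool :=
  let da := q.1 - p.1 in
  let db := q.2 - p.2 in
  [|| (da == 1) && (db == 0), (da == -1) && (db == 0),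
      (da == 0) && (db == 1), (da == 0) && (db == -1),
      (da == 1) && (db == -1) | (da == -1) && (db == 1)].

(* A Hex region: a finite type T of cells, embedded injectively into the
   hexagonal grid by pos; adjacency is grid adjacency of the positions. *)
Definition cell_adj (T : finType) (pos : T -> int * int) : rel T :=
  fun x y => hex_adj (pos x) (pos y).

Definition adj_in (T : finType) (pos : T -> int * int) (S : {set T}) : rel T :=
  fun x y => [&& x \in S, y \in S & cell_adj pos x y].

Definition component (T : finType) (pos : T -> int * int) (S : {set T}) (x : T)
  : {set T} := [set y | connect (adj_in pos S) x y].

Definition n_components (T : finType) (pos : T -> int * int) (S : {set T}) : nat :=
  #|[set component pos S x | x in S]|.

(* Main.v *)
Require Import Defs.
From mathcomp Require Import all_boot all_order all_algebra zify.
Import GRing.Theory Num.Theory.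
Local Open Scope ring_scope.

Definition grp (pv pw : int * int) : nat :=
  let da := pw.1 - pv.1 in let db := pw.2 - pv.2 in
  if ((da == 1) && (db == 0)) || ((da == 0) && (db == 1)) then 0%N
  else if ((da == -1) && (db == 1)) || ((da == -1) && (db == 0)) then 1%N
  else 2%N.

Lemma diffE (a a' c : int) : a' - a = (a' - c) - (a - c).
Proof. by rewrite opprB addrA subrK. Qed.

Lemma pair_adj (pv pw pw' : int * int) : hex_adj pv pw -> hex_adj pv pw' ->
  grp pv pw = grp pv pw' -> pw != pw' -> hex_adj pw pw'.
Proof.
case: pv => c d; case: pw => a b; case: pw' => a' b'.
rewrite /hex_adj /grp /= (diffE a a' c) (diffE b b' d) xpair_eqE.
rewrite -(inj_eq (addIr (-c)) a a') -(inj_eq (addIr (-d)) b b').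
move: (a - c) (b - d) (a' - c) (b' - d) => x y x' y'.
by repeat case/orP; case/andP => /eqP -> /eqP ->; 
   repeat case/orP; case/andP => /eqP -> /eqP ->.
Qed.

Lemma hex_adj_sym p q : hex_adj p q = hex_adj q p.
Proof.
wlog suff: p q / hex_adj p q -> hex_adj q p.
  by move=> H; apply/idP/idP; apply: H.
case: p => a b; case: q => c d; rewrite /hex_adj /=.
rewrite -(opprB c a) -(opprB d b).
by repeat case/orP; case/andP => /eqP -> /eqP ->.
Qed.

Section Main.
Variables (T : finType) (pos : T -> int * int).

Lemma adj_in_sym (S : {set T}) : symmetric (adj_in pos S).
Proof. by move=> x y; rewrite /adj_in /cell_adj hex_adj_sym andbCA. Qed.

Lemma comp_eq (S : {set T}) x y : connect (adj_in pos S) x y ->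
  component pos S x = component pos S y.
Proof.
move=> h; apply/setP=> z; rewrite !inE.
exact: (same_connect (sym_connect_sym (adj_in_sym S)) h z).
Qed.

Lemma conn_sub (S S' : {set T}) x y : S \subset S' -> connect (adj_in pos S) x y ->
  connect (adj_in pos S') x y.
Proof.
move=> sub; apply: connect_sub => a b /and3P[aS bS ab].
by apply: connect1; rewrite /adj_in (subsetP sub _ aS) (subsetP sub _ bS).
Qed.

Lemma mem_comp (S : {set T}) x : x \in component pos S x.
Proof. by rewrite inE connect0. Qed.


Variables (B : {set T}) (v : T).
Hypotheses (inj : injective pos) (vB : v \in B).
Let S := B :\ v.
Let eB := adj_in pos B.
Let eS := adj_in pos S.

Lemma claim1 x : x \in S -> ~~ connect eB v x ->
  component pos S x = component pos B x.
Proof.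
move=> xS nvx; apply/setP => y; rewrite !inE; apply/idP/idP.
  by apply: conn_sub; rewrite subD1set.
case/connectP => p hp ->{y}.
elim: p x xS nvx hp => [|b p IH] a aS nva /=; first by rewrite connect0.
case/andP => eab hp.
have [_ bB _] := and3P eab.
have nvb : ~~ connect eB v b.
  apply: contra nva => cvb; apply: connect_trans cvb _.
  by apply: connect1; rewrite /eB adj_in_sym.
have bS : b \in S.
  rewrite !inE bB andbT; apply: contra nvb => /eqP ->; exact: connect0.
apply: connect_trans (IH b bS nvb hp).
apply: connect1; move: eab; rewrite /eS /eB /adj_in aS bS.
by case/and3P.
Qed.

Definition Nb w := hex_adj (pos v) (pos w) && (w \in S).

Lemma claim2 x : x \in S -> connect eB v x ->
  exists2 w, Nb w & connect eS w x.
Proof.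
move=> xS /connectP[p hp ex].
suff : last v p = v \/ exists2 w, Nb w & connect eS w (last v p).
  rewrite -ex; case=> // xv; move: xS; rewrite xv !inE eqxx //.
have gen : forall q a, path eB a q ->
    (a = v \/ exists2 w, Nb w & connect eS w a) ->
    (last a q = v \/ exists2 w, Nb w & connect eS w (last a q)).
  elim=> [|b q IH] a //= /andP[eab hq] Ha.
  apply: IH hq _.
have [aB bB ab] := and3P eab.
have [bv|bnv] := eqVneq b v; first by left.
have bS : b \in S by rewrite !inE bnv.
right.
have [av|anv] := eqVneq a v.
  by exists b; [rewrite /Nb -av bS andbT; exact: ab | exact: connect0].
have aS : a \in S by rewrite !inE anv.
case: Ha => [av|]; first by rewrite av eqxx in anv.
case=> w Nw cw; exists w => //.
apply: connect_trans cw (connect1 _).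
by rewrite /eS /adj_in aS bS.
by apply: gen hp _; left.
Qed.

Lemma claim3 (i : nat) :
  (#|[set component pos S w | w in [pred u | Nb u && (grp (pos v) (pos u) == i)]]| <= 1)%N.
Proof.
apply/card_le1_eqP => K1 K2 /imsetP[w1 + ->] /imsetP[w2 + ->].
rewrite !inE => /andP[N1 /eqP g1] /andP[N2 /eqP g2].
apply: comp_eq.
have [<-|ne] := eqVneq w1 w2; first exact: connect0.
apply: connect1.
case/andP: N1 => a1 s1; case/andP: N2 => a2 s2.
rewrite /adj_in s1 s2 /cell_adj /=; apply: pair_adj a2 a1 _ _.
  by rewrite g1 g2.
by apply: contra ne => /eqP /inj ->.
Qed.


Lemma cardU_le {U : finType} (X Y : {set U}) : (#|X :|: Y| <= #|X| + #|Y|)%N.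
Proof. by rewrite -cardsUI leq_addr. Qed.

Lemma grp_lt3 p q : grp p q = 0%N \/ grp p q = 1%N \/ grp p q = 2%N.
Proof. by rewrite /grp; case: ifP => _; [left | case: ifP => _; right; [left|right]]. Qed.

Lemma main : (n_components pos S <= n_components pos B + 2)%N.
Proof.
set I := [set component pos B x | x in B].
set C := component pos B v.
set A := [set component pos B x | x in [pred u | (u \in S) && ~~ connect eB v u]].
pose K i := [set component pos S w | w in [pred u | Nb u && (grp (pos v) (pos u) == i)]].
have sub : [set component pos S x | x in S] \subset A :|: (K 0%N :|: K 1%N :|: K 2%N).
  apply/subsetP => _ /imsetP[x xS ->].
  case: (boolP (connect eB v x)) => cvx.
    have [w Nw cw] := @claim2 x xS cvx.
    rewrite -(@comp_eq S w x cw).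
    have Kw : component pos S w \in K (grp (pos v) (pos w)).
      by apply/imsetP; exists w => //; rewrite inE Nw eqxx.
    apply/setUP; right.
    case: (grp_lt3 (pos v) (pos w)) => [g|[g|g]]; rewrite g in Kw.
    - by apply/setUP; left; apply/setUP; left.
    - by apply/setUP; left; apply/setUP; right.
    - by apply/setUP; right.
  rewrite claim1 //; apply/setUP; left; apply/imsetP; exists x => //.
  by rewrite inE xS cvx.
have hA : (#|A| + 1 <= #|I|)%N.
  have CI : C \in I by apply/imsetP; exists v.
  rewrite (cardsD1 C I) CI addnC add1n ltnS; apply: subset_leq_card.
  apply/subsetP => y /imsetP[x + ->]; rewrite inE => /andP[xS nvx].
  rewrite !inE; apply/andP; split; last first.
    by apply/imsetP; exists x => //; move: xS; rewrite !inE => /andP[].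
  apply: contra nvx => /eqP Ex.
  by have := mem_comp B x; rewrite Ex inE.
rewrite /n_components -/S -/I.
apply: (leq_trans (subset_leq_card sub)).
have := cardU_le A (K 0%N :|: K 1%N :|: K 2%N).
have h0 := claim3 0; have h1 := claim3 1; have h2 := claim3 2.
have := cardU_le (K 0%N :|: K 1%N) (K 2%N).
have := cardU_le (K 0%N) (K 1%N).
rewrite /K; lia.
Qed.

End Main.

Theorem lemma11p3 (T : finType) (pos : T -> int * int) (B : {set T}) (v : T) :
  injective pos -> v \in B ->
  (n_components pos (B :\ v) <= n_components pos B + 2)%N.
Proof. by move=> inj vB; apply: main. Qed.
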